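(* Consider the binary model. (a) For every $n\ge2$ and all $\mathbf{x},\mathbf{y},\mathbf{v}\in\mathbb{R}^{2n-1}$, \[ \|[F'(\mathbf{x})-F'(\mathbf{y})]\mathbf{v}\|_\infty\le (n-1)\|\mathbf{x}-\mathbf{y}\|_\infty\|\mathbf{v}\|_\infty,\qquad \max_{i=1,\dots,2n-1}\|F_i'(\mathbf{x})-F_i'(\mathbf{y})\|_\infty\le \frac{n-1}{2}\|\mathbf{x}-\mathbf{y}\|_\infty . \] (b) There are absolute constants $c_{11},c_{12}>0$ such that the following holds: let $\boldsymbol\theta^*=\boldsymbol\theta^*_n\in\mathbb{R}^{2n-1}$ satisfy $e^{2\|\boldsymbol\theta^*\|_\infty}=o(n)$. Then for all sufficiently large $n$, whenever the realized degrees satisfy \[ \max\Bigl\{\max_{1\le i\le n}|d_i-\mathbb{E}_{\boldsymbol\theta^*}d_i|,\ \max_{1\le j\le n}|b_j-\mathbb{E}_{\boldsymbol\theta^*}b_j|\Bigr\}\le\sqrt{(n-1)\log(n-1)}, \] one has \[ r:=\bigl\|[F'(\boldsymbol\theta^* )]^{-1}F(\boldsymbol\theta^* )\bigr\|_\infty\le \frac{(\log n)^{1/2}}{n^{1/2}}\Bigl(c_{11}e^{6\|\boldsymbol\theta^*\|_\infty}+c_{12}e^{2\|\boldsymbol\theta^*\|_\infty}\Bigr). \]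
   Context: Binary model: Let $n\ge2$. For $\boldsymbol\theta=(\alpha_1,\dots,\alpha_n,\beta_1,\dots,\beta_{n-1})^\top\in\mathbb{R}^{2n-1}$ set $\beta_n=0$, and let $\mathbb{P}_{\boldsymbol\theta}$ be the law of a random $n\times n$ matrix $A=(a_{i,j})$ with $a_{i,i}=0$ and $a_{i,j}$ ($i\ne j$) mutually independent Bernoulli with $\mathbb{P}(a_{i,j}=1)=e^{\alpha_i+\beta_j}/(1+e^{\alpha_i+\beta_j})$. Out-degrees $d_i=\sum_{j\ne i}a_{i,j}$, in-degrees $b_j=\sum_{i\ne j}a_{i,j}$. Let $f(x)=e^x/(1+e^x)$ and define $F:\mathbb{R}^{2n-1}\to\mathbb{R}^{2n-1}$ by $F_i(\boldsymbol\theta)=d_i-\sum_{k\ne i}f(\alpha_i+\beta_k)$ for $i=1,\dots,n$ and $F_{n+j}(\boldsymbol\theta)=b_j-\sum_{k\ne j}f(\alpha_k+\beta_j)$ for $j=1,\dots,n-1$ (always with $\beta_n=0$). $F'(\boldsymbol\theta)$ is the Jacobian matrix of $F$ and $F_i'(\boldsymbol\theta)$ the gradient of $F_i$. $\|\cdot\|_\infty$ is the max-norm of vectors. *)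

(* Defs.v *)
From Stdlib Require Import Reals Lra Lia List.
Import ListNotations.
Open Scope R_scope.

(* Vectors in R^m are functions nat -> R, only indices 0..m-1 matter.
   Parameter theta in R^{2n-1}: indices 0..n-1 are alpha_1..alpha_n,
   indices n..2n-2 are beta_1..beta_{n-1}; beta_n = 0. *)

Definition sumR (m : nat) (g : nat -> R) : R :=
  fold_right Rplus 0 (map g (seq 0 m)).

Definition norm_inf (m : nat) (v : nat -> R) : R :=
  fold_right Rmax 0 (map (fun i => Rabs (v i)) (seq 0 m)).

Definition logistic (x : R) : R := exp x / (1 + exp x).

Definition alpha (theta : nat -> R) (i : nat) : R := theta i.
Definition beta (n : nat) (theta : nat -> R) (j : nat) : R :=
  if Nat.ltb j (n - 1) then theta (n + j)%nat else 0.

Definition ind (b : bool) : R := if b then 1 else 0.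

Definition outdeg (n : nat) (a : nat -> nat -> bool) (i : nat) : R :=
  sumR n (fun j => if Nat.eqb j i then 0 else ind (a i j)).
Definition indeg (n : nat) (a : nat -> nat -> bool) (j : nat) : R :=
  sumR n (fun i => if Nat.eqb i j then 0 else ind (a i j)).

(* Expectations of degrees under P_theta (linearity of expectation:
   E d_i = sum_{j<>i} P(a_ij = 1) = sum_{j<>i} f(alpha_i + beta_j)). *)
Definition Eoutdeg (n : nat) (theta : nat -> R) (i : nat) : R :=
  sumR n (fun k => if Nat.eqb k i then 0
                   else logistic (alpha theta i + beta n theta k)).
Definition Eindeg (n : nat) (theta : nat -> R) (j : nat) : R :=
  sumR n (fun k => if Nat.eqb k j then 0
                   else logistic (alpha theta k + beta n theta j)).

Definition Fmap (n : nat) (a : nat -> nat -> bool) (theta : nat -> R) (i : nat) : R :=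
  if Nat.ltb i n then outdeg n a i - Eoutdeg n theta i
  else indeg n a (i - n) - Eindeg n theta (i - n).

Definition upd (x : nat -> R) (k : nat) (t : R) : nat -> R :=
  fun j => if Nat.eqb j k then t else x j.

Definition is_jacobian (m : nat) (G : (nat -> R) -> nat -> R) (x : nat -> R)
  (J : nat -> nat -> R) : Prop :=
  forall i k, (i < m)%nat -> (k < m)%nat ->
    derivable_pt_lim (fun t => G (upd x k t) i) (x k) (J i k).

Definition matvec (m : nat) (J : nat -> nat -> R) (v : nat -> R) : nat -> R :=
  fun i => sumR m (fun k => J i k * v k).

Definition vsub (x y : nat -> R) : nat -> R := fun i => x i - y i.

Definition invertible (m : nat) (J : nat -> nat -> R) : Prop :=
  forall v, (forall i, (i < m)%nat -> matvec m J v i = 0) ->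
            forall i, (i < m)%nat -> v i = 0.

(* Main.v *)
From Stdlib Require Import Reals Lra Lia List FunctionalExtensionality.
Require Import Defs.
Open Scope R_scope.


Lemma fold_plus_acc (l : list R) x : fold_right Rplus x l = fold_right Rplus 0 l + x.
Proof. induction l; simpl; [lra| rewrite IHl; lra]. Qed.

Lemma sumR_0 g : sumR 0 g = 0.
Proof. reflexivity. Qed.

Lemma sumR_S m g : sumR (S m) g = sumR m g + g m.
Proof. unfold sumR. rewrite seq_S, map_app, fold_right_app. simpl.
  rewrite fold_plus_acc. lra. Qed.

Lemma sumR_ext m f g : (forall k, (k < m)%nat -> f k = g k) -> sumR m f = sumR m g.
Proof. induction m; intros H; [reflexivity|]. rewrite !sumR_S, IHm, H; auto. Qed.

Lemma sumR_plus m f g : sumR m (fun k => f k + g k) = sumR m f + sumR m g.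
Proof. induction m; [rewrite !sumR_0; lra|]. rewrite !sumR_S, IHm; lra. Qed.

Lemma sumR_minus m f g : sumR m (fun k => f k - g k) = sumR m f - sumR m g.
Proof. induction m; [rewrite !sumR_0; lra|]. rewrite !sumR_S, IHm; lra. Qed.

Lemma sumR_scal m c f : sumR m (fun k => c * f k) = c * sumR m f.
Proof. induction m; [rewrite !sumR_0; lra|]. rewrite !sumR_S, IHm; lra. Qed.

Lemma sumR_scalr m c f : sumR m (fun k => f k * c) = sumR m f * c.
Proof. induction m; [rewrite !sumR_0; lra|]. rewrite !sumR_S, IHm; lra. Qed.

Lemma sumR_opp m f : sumR m (fun k => - f k) = - sumR m f.
Proof. induction m; [rewrite !sumR_0; lra|]. rewrite !sumR_S, IHm; lra. Qed.

Lemma sumR_le m f g : (forall k, (k < m)%nat -> f k <= g k) -> sumR m f <= sumR m g.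
Proof. induction m; intros H; [rewrite !sumR_0; lra|]. rewrite !sumR_S.
  assert (f m <= g m) by (apply H; lia). assert (sumR m f <= sumR m g) by (apply IHm; intros; apply H; lia). lra. Qed.

Lemma sumR_const m c : sumR m (fun _ => c) = INR m * c.
Proof. induction m; [rewrite sumR_0; simpl; lra|]. rewrite sumR_S, IHm, S_INR; lra. Qed.

Lemma sumR_zero m f : (forall k, (k < m)%nat -> f k = 0) -> sumR m f = 0.
Proof. intros H. rewrite (sumR_ext m f (fun _ => 0)) by auto. rewrite sumR_const; lra. Qed.

Lemma sumR_abs m f : Rabs (sumR m f) <= sumR m (fun k => Rabs (f k)).
Proof. induction m; [rewrite !sumR_0, Rabs_R0; lra|]. rewrite !sumR_S.
  eapply Rle_trans; [apply Rabs_triang|]. lra. Qed.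

Lemma sumR_swap m p f : sumR m (fun i => sumR p (fun k => f i k)) = sumR p (fun k => sumR m (fun i => f i k)).
Proof. induction m.
  - rewrite sumR_0. symmetry. apply sumR_zero. intros; reflexivity.
  - rewrite sumR_S, IHm. rewrite <- sumR_plus. apply sumR_ext. intros. rewrite sumR_S. reflexivity. Qed.

Lemma sumR_excl m i g : (i < m)%nat ->
  sumR m (fun k => if Nat.eqb k i then 0 else g k) = sumR m g - g i.
Proof. induction m; intros H; [lia|]. rewrite !sumR_S.
  destruct (Nat.eq_dec i m).
  - subst. rewrite Nat.eqb_refl. rewrite (sumR_ext m _ g). lra.
    intros k Hk. destruct (Nat.eqb_spec k m); [lia|auto].
  - rewrite IHm by lia. destruct (Nat.eqb_spec m i); [lia|]. lra. Qed.

Lemma sumR_delta m a v : (a < m)%nat -> sumR m (fun p => ind (Nat.eqb a p) * v p) = v a.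
Proof. induction m; intros H; [lia|]. rewrite sumR_S.
  destruct (Nat.eq_dec a m).
  - subst. rewrite Nat.eqb_refl. rewrite sumR_zero. unfold ind; lra.
    intros k Hk. destruct (Nat.eqb_spec m k); [lia|]. unfold ind; lra.
  - rewrite IHm by lia. destruct (Nat.eqb_spec a m); [lia|]. unfold ind; lra. Qed.

Lemma bound_excl n r g C : (r < n)%nat ->
  (forall k, (k < n)%nat -> k <> r -> Rabs (g k) <= C) ->
  Rabs (sumR n (fun k => if Nat.eqb k r then 0 else g k)) <= INR (n - 1) * C.
Proof. intros Hr H. eapply Rle_trans; [apply sumR_abs|].
  eapply Rle_trans. apply (sumR_le _ _ (fun k => if Nat.eqb k r then 0 else C)).
  intros k Hk. destruct (Nat.eqb_spec k r). rewrite Rabs_R0; lra. auto.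
  rewrite sumR_excl, sumR_const by auto. rewrite minus_INR by lia. simpl. lra. Qed.

Lemma fold_max_nonneg (l : list R) : 0 <= fold_right Rmax 0 l.
Proof. induction l; simpl; [lra|]. eapply Rle_trans; [apply IHl| apply Rmax_r]. Qed.

Lemma fold_max_ge (l : list R) x : In x l -> x <= fold_right Rmax 0 l.
Proof. induction l; simpl; [tauto|]. intros [<-|H]. apply Rmax_l.
  eapply Rle_trans; [apply IHl; auto| apply Rmax_r]. Qed.

Lemma fold_max_le (l : list R) C : 0 <= C -> (forall x, In x l -> x <= C) -> fold_right Rmax 0 l <= C.
Proof. induction l; simpl; intros; [lra|]. apply Rmax_lub; auto. Qed.

Lemma norm_inf_nonneg m v : 0 <= norm_inf m v.
Proof. apply fold_max_nonneg. Qed.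

Lemma norm_inf_ge m v i : (i < m)%nat -> Rabs (v i) <= norm_inf m v.
Proof. intros. apply fold_max_ge. apply (in_map (fun i => Rabs (v i))). apply in_seq. lia. Qed.

Lemma norm_inf_le m v C : 0 <= C -> (forall i, (i < m)%nat -> Rabs (v i) <= C) -> norm_inf m v <= C.
Proof. intros. apply fold_max_le; auto. intros x Hx. apply in_map_iff in Hx.
  destruct Hx as [i [<- Hi]]. apply in_seq in Hi. apply H0; lia. Qed.


Definition Dl (x : R) : R := exp x / ((1 + exp x) * (1 + exp x)).

Lemma dlogistic x : derivable_pt_lim logistic x (Dl x).
Proof.
  assert (H := derivable_pt_lim_div exp (fun t => 1 + exp t) x (exp x) (exp x)
    (derivable_pt_lim_exp x)).
  assert (H2 : derivable_pt_lim (fun t => 1 + exp t) x (exp x)).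
  { replace (exp x) with (0 + exp x) by ring.
    apply (derivable_pt_lim_plus (fct_cte 1) exp). apply derivable_pt_lim_const.
    apply derivable_pt_lim_exp. }
  assert (Hp := exp_pos x).
  specialize (H H2 ltac:(lra)).
  unfold logistic, Dl. replace (exp x / ((1 + exp x) * (1 + exp x))) with
    ((exp x * (1 + exp x) - exp x * exp x) / (1 + exp x)²).
  exact H. unfold Rsqr. field. lra. Qed.

Lemma logistic_bounds x : 0 < logistic x < 1.
Proof. unfold logistic. assert (Hp := exp_pos x). split.
  apply Rdiv_lt_0_compat; lra. apply Rmult_lt_reg_r with (1 + exp x). lra.
  unfold Rdiv. rewrite Rmult_assoc, Rinv_l by lra. lra. Qed.

Lemma Dl_eq x : Dl x = logistic x * (1 - logistic x).
Proof. unfold Dl, logistic. assert (Hp := exp_pos x). field. lra. Qed.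

Lemma Dl_le x : Dl x <= 1/4.
Proof. rewrite Dl_eq. pose proof (Rle_0_sqr (logistic x - 1/2)). unfold Rsqr in *. nra. Qed.

Lemma Dl_ge x : exp (- Rabs x) / 4 <= Dl x.
Proof. unfold Dl. assert (Hp := exp_pos x). set (e := exp x) in *.
  assert (Hq := exp_pos (- Rabs x)).
  apply Rmult_le_reg_r with (4 * ((1 + e) * (1 + e))). nra.
  replace (e / ((1 + e) * (1 + e)) * (4 * ((1 + e) * (1 + e)))) with (4 * e) by (field; lra).
  replace (exp (- Rabs x) / 4 * (4 * ((1 + e) * (1 + e)))) with (exp (- Rabs x) * ((1 + e) * (1 + e))) by field.
  destruct (Rle_or_lt 0 x).
  - rewrite Rabs_pos_eq by lra. assert (exp (-x) * e = 1) by (unfold e; rewrite <- exp_plus; replace (-x + x) with 0 by ring; apply exp_0).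
    assert (1 <= e) by (unfold e; pose proof (exp_ineq1_le x); lra).
    assert (exp (-x) <= 1) by nra. nra.
  - rewrite Rabs_left by lra. replace (- - x) with x by ring. fold e.
    assert (e <= 1). { unfold e. rewrite <- exp_0. left. apply exp_increasing. lra. }
    nra. Qed.

Lemma logistic_lip a b : Rabs (logistic a - logistic b) <= Rabs (a - b) / 4.
Proof.
  assert (G : forall a b, a < b -> Rabs (logistic b - logistic a) <= Rabs (b - a) / 4).
  { intros x y Hxy. destruct (MVT_cor2 logistic Dl x y Hxy) as [c [Hc _]].
    intros; apply dlogistic. rewrite Hc. rewrite Rabs_mult.
    assert (0 <= Dl c) by (rewrite Dl_eq; pose proof (logistic_bounds c); nra).
    rewrite (Rabs_pos_eq (Dl c)) by lra. pose proof (Dl_le c).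
    pose proof (Rabs_pos (y - x)). nra. }
  destruct (Rtotal_order a b) as [H|[H|H]].
  - rewrite Rabs_minus_sym, (Rabs_minus_sym a). apply G; auto.
  - rewrite H; unfold Rminus; rewrite !Rplus_opp_r, Rabs_R0; lra.
  - apply G; auto. Qed.

Lemma Dl_lip a b : Rabs (Dl a - Dl b) <= Rabs (a - b) / 4.
Proof. rewrite !Dl_eq. pose proof (logistic_bounds a). pose proof (logistic_bounds b).
  replace (logistic a * (1 - logistic a) - logistic b * (1 - logistic b)) with
    ((logistic a - logistic b) * (1 - logistic a - logistic b)) by ring.
  rewrite Rabs_mult. assert (Rabs (1 - logistic a - logistic b) <= 1) by (apply Rabs_le; lra).
  pose proof (logistic_lip a b). pose proof (Rabs_pos (logistic a - logistic b)). nra. Qed.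

Definition eJ (n a b p : nat) : R :=
  ind (Nat.eqb a p) + (if Nat.ltb b (n - 1) then ind (Nat.eqb (n + b) p) else 0).

Lemma d_aff (c : bool) K t0 : derivable_pt_lim (fun t => if c then t else K) t0 (ind c).
Proof. destruct c; unfold ind. apply derivable_pt_lim_id. apply derivable_pt_lim_const. Qed.

Lemma upd_same theta p : upd theta p (theta p) = theta.
Proof. apply functional_extensionality; intros j. unfold upd. destruct (Nat.eqb_spec j p); subst; reflexivity. Qed.

Lemma d_term n theta p a b :
  derivable_pt_lim (fun t => logistic (alpha (upd theta p t) a + beta n (upd theta p t) b))
    (theta p) (Dl (theta a + beta n theta b) * eJ n a b p).
Proof.
  set (g := fun t => alpha (upd theta p t) a + beta n (upd theta p t) b).
  change (derivable_pt_lim (comp logistic g) (theta p) (Dl (theta a + beta n theta b) * eJ n a b p)).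
  assert (Hg : g (theta p) = theta a + beta n theta b).
  { unfold g. rewrite upd_same. reflexivity. }
  apply derivable_pt_lim_comp.
  - unfold g, eJ, alpha, beta, upd.
    apply (derivable_pt_lim_plus (fun t => if Nat.eqb a p then t else theta a)
             (fun t => if Nat.ltb b (n - 1)%nat then if Nat.eqb (n + b)%nat p then t else theta (n + b)%nat else 0)).
    apply d_aff. destruct (Nat.ltb b (n-1)). apply d_aff.
    apply (derivable_pt_lim_const 0).
  - rewrite Hg. apply dlogistic.
Qed.

Lemma d_sum m (h : nat -> R -> R) h' t0 :
  (forall k, derivable_pt_lim (h k) t0 (h' k)) ->
  derivable_pt_lim (fun t => sumR m (fun k => h k t)) t0 (sumR m h').
Proof. intros H. induction m.
  - rewrite sumR_0. replace (fun t => sumR 0 (fun k => h k t)) with (fct_cte 0).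
    apply derivable_pt_lim_const. apply functional_extensionality; reflexivity.
  - replace (fun t => sumR (S m) (fun k => h k t)) with
      (plus_fct (fun t => sumR m (fun k => h k t)) (h m)).
    rewrite sumR_S. apply derivable_pt_lim_plus; auto.
    apply functional_extensionality; intros t. unfold plus_fct. rewrite sumR_S. reflexivity.
Qed.

Definition rowJ (n : nat) (theta : nat -> R) (r : nat) (A B : nat -> nat) (p : nat) : R :=
  - sumR n (fun k => if Nat.eqb k r then 0
       else Dl (theta (A k) + beta n theta (B k)) * eJ n (A k) (B k) p).

Definition Jf (n : nat) (theta : nat -> R) (i p : nat) : R :=
  if Nat.ltb i n then rowJ n theta i (fun _ => i) (fun k => k) p
  else rowJ n theta (i - n)%nat (fun k => k) (fun _ => (i - n)%nat) p.

Lemma Fmap_deriv n a theta i p :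
  derivable_pt_lim (fun t => Fmap n a (upd theta p t) i) (theta p) (Jf n theta i p).
Proof.
  unfold Fmap, Jf, rowJ. destruct (Nat.ltb i n).
  - replace (- _) with (0 - sumR n (fun k => if Nat.eqb k i then 0
       else Dl (theta i + beta n theta k) * eJ n i k p)) by ring.
    apply (derivable_pt_lim_minus (fct_cte (outdeg n a i)) (fun t => Eoutdeg n (upd theta p t) i)).
    apply derivable_pt_lim_const.
    unfold Eoutdeg.
    apply (d_sum n (fun k t => if Nat.eqb k i then 0 else logistic (alpha (upd theta p t) i + beta n (upd theta p t) k))).
    intros k. destruct (Nat.eqb k i). apply (derivable_pt_lim_const 0). apply d_term.
  - replace (- _) with (0 - sumR n (fun k => if Nat.eqb k (i - n)%nat then 0
       else Dl (theta k + beta n theta (i - n)%nat) * eJ n k (i - n)%nat p)) by ring.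
    apply (derivable_pt_lim_minus (fct_cte (indeg n a (i - n)%nat)) (fun t => Eindeg n (upd theta p t) (i - n)%nat)).
    apply derivable_pt_lim_const.
    unfold Eindeg.
    apply (d_sum n (fun k t => if Nat.eqb k (i - n)%nat then 0 else logistic (alpha (upd theta p t) k + beta n (upd theta p t) (i - n)%nat))).
    intros k. destruct (Nat.eqb k (i - n)%nat). apply (derivable_pt_lim_const 0). apply d_term.
Qed.

Lemma J_eq m n a theta J i p : is_jacobian m (Fmap n a) theta J -> (i < m)%nat -> (p < m)%nat ->
  J i p = Jf n theta i p.
Proof. intros H Hi Hp. eapply uniqueness_limite. apply H; auto. apply Fmap_deriv. Qed.


Lemma sum_eJ m n a b v : (a < m)%nat -> ((b < n - 1)%nat -> (n + b < m)%nat) ->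
  sumR m (fun p => eJ n a b p * v p) = v a + beta n v b.
Proof. intros Ha Hb. unfold eJ, beta.
  rewrite (sumR_ext m _ (fun p => ind (Nat.eqb a p) * v p +
     (if Nat.ltb b (n-1) then ind (Nat.eqb (n + b) p) else 0) * v p)) by (intros; ring).
  rewrite sumR_plus, sumR_delta by auto. f_equal.
  destruct (Nat.ltb_spec b (n-1)). apply sumR_delta; auto.
  apply sumR_zero. intros; ring. Qed.

Lemma matvec_row m n theta r A B v :
  (forall k, (k < n)%nat -> (A k < m)%nat /\ ((B k < n - 1)%nat -> (n + B k < m)%nat)) ->
  sumR m (fun p => rowJ n theta r A B p * v p) =
  - sumR n (fun k => if Nat.eqb k r then 0 else
      Dl (theta (A k) + beta n theta (B k)) * (v (A k) + beta n v (B k))).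
Proof. intros H. unfold rowJ.
  transitivity (sumR m (fun p => - sumR n (fun k => (if Nat.eqb k r then 0 else
       Dl (theta (A k) + beta n theta (B k)) * eJ n (A k) (B k) p) * v p))).
  { apply sumR_ext; intros. rewrite sumR_scalr. ring. }
  rewrite sumR_opp, sumR_swap. f_equal. apply sumR_ext. intros k Hk.
  destruct (Nat.eqb k r). apply sumR_zero; intros; ring.
  rewrite (sumR_ext m _ (fun p => Dl (theta (A k) + beta n theta (B k)) * (eJ n (A k) (B k) p * v p)))
    by (intros; ring).
  rewrite sumR_scal. destruct (H k Hk). rewrite sum_eJ; auto. Qed.

Lemma beta_abs n v b : Rabs (beta n v b) <= norm_inf (2 * n - 1) v.
Proof. unfold beta. destruct (Nat.ltb_spec b (n - 1)).
  apply norm_inf_ge; lia. rewrite Rabs_R0; apply norm_inf_nonneg. Qed.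

Lemma beta_diff n x y b : Rabs (beta n x b - beta n y b) <= norm_inf (2 * n - 1) (vsub x y).
Proof. unfold beta. destruct (Nat.ltb_spec b (n - 1)).
  apply (norm_inf_ge (2*n-1) (vsub x y) (n + b)); lia.
  replace (0 - 0) with 0 by ring. rewrite Rabs_R0; apply norm_inf_nonneg. Qed.

Lemma diff_excl n r f g :
  sumR n (fun k => if Nat.eqb k r then 0 else f k) - sumR n (fun k => if Nat.eqb k r then 0 else g k)
  = sumR n (fun k => if Nat.eqb k r then 0 else f k - g k).
Proof. rewrite <- sumR_minus. apply sumR_ext. intros. destruct (Nat.eqb k r); ring. Qed.

Lemma Dl_diff_bound n x y a b :
  (a < 2 * n - 1)%nat ->
  Rabs (Dl (x a + beta n x b) - Dl (y a + beta n y b)) <= norm_inf (2*n-1) (vsub x y) / 2.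
Proof. intros Ha. eapply Rle_trans. apply Dl_lip.
  replace (x a + beta n x b - (y a + beta n y b)) with (vsub x y a + (beta n x b - beta n y b))
    by (unfold vsub; ring).
  pose proof (Rabs_triang (vsub x y a) (beta n x b - beta n y b)).
  pose proof (norm_inf_ge _ (vsub x y) a Ha). pose proof (beta_diff n x y b). lra. Qed.

Lemma rowdiff_a1 n r A B x y v : (2 <= n)%nat -> (r < n)%nat ->
  (forall k, (k < n)%nat -> (A k < n)%nat /\ ((B k < n - 1)%nat -> (n + B k < 2 * n - 1)%nat)) ->
  Rabs (sumR (2*n-1) (fun p => rowJ n x r A B p * v p) - sumR (2*n-1) (fun p => rowJ n y r A B p * v p))
  <= INR (n - 1) * norm_inf (2*n-1) (vsub x y) * norm_inf (2*n-1) v.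
Proof. intros Hn Hr H.
  rewrite !(matvec_row (2*n-1)) by (intros k Hk; destruct (H k Hk); split; [lia|auto]).
  match goal with |- Rabs (- ?S1 - - ?S2) <= _ => replace (- S1 - - S2) with (- (S1 - S2)) by ring end.
  rewrite Rabs_Ropp, diff_excl. rewrite Rmult_assoc. apply bound_excl; auto.
  intros k Hk _. destruct (H k Hk) as [HA _].
  replace (Dl (x (A k) + beta n x (B k)) * (v (A k) + beta n v (B k)) -
           Dl (y (A k) + beta n y (B k)) * (v (A k) + beta n v (B k))) with
     ((Dl (x (A k) + beta n x (B k)) - Dl (y (A k) + beta n y (B k))) * (v (A k) + beta n v (B k))) by ring.
  rewrite Rabs_mult.
  pose proof (Dl_diff_bound n x y (A k) (B k) ltac:(lia)).
  pose proof (Rabs_triang (v (A k)) (beta n v (B k))).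
  pose proof (norm_inf_ge (2*n-1) v (A k) ltac:(lia)). pose proof (beta_abs n v (B k)).
  pose proof (Rabs_pos (Dl (x (A k) + beta n x (B k)) - Dl (y (A k) + beta n y (B k)))).
  pose proof (Rabs_pos (v (A k) + beta n v (B k))).
  pose proof (norm_inf_nonneg (2*n-1) (vsub x y)).
  apply Rle_trans with (norm_inf (2*n-1) (vsub x y) / 2 * (2 * norm_inf (2*n-1) v)).
  apply Rmult_le_compat; auto; lra. lra.
Qed.

Lemma eJ_bound n a b p : (a < n)%nat -> 0 <= eJ n a b p <= 1.
Proof. intros Ha. unfold eJ, ind. destruct (Nat.eqb_spec a p); destruct (Nat.ltb b (n-1));
  try destruct (Nat.eqb_spec (n+b) p); try lia; lra. Qed.

Lemma rowdiff_a2 n r A B x y p : (2 <= n)%nat -> (r < n)%nat ->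
  (forall k, (k < n)%nat -> (A k < n)%nat) ->
  Rabs (rowJ n x r A B p - rowJ n y r A B p)
  <= INR (n - 1) / 2 * norm_inf (2*n-1) (vsub x y).
Proof. intros Hn Hr H. unfold rowJ.
  match goal with |- Rabs (- ?S1 - - ?S2) <= _ => replace (- S1 - - S2) with (- (S1 - S2)) by ring end.
  rewrite Rabs_Ropp, diff_excl.
  replace (INR (n - 1) / 2 * norm_inf (2*n-1) (vsub x y)) with (INR (n - 1) * (norm_inf (2*n-1) (vsub x y) / 2)) by field.
  apply bound_excl; auto.
  intros k Hk _. pose proof (H k Hk) as HA.
  rewrite <- Rmult_minus_distr_r, Rabs_mult.
  pose proof (Dl_diff_bound n x y (A k) (B k) ltac:(lia)).
  pose proof (eJ_bound n (A k) (B k) p HA).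
  rewrite (Rabs_pos_eq (eJ _ _ _ _)) by lra.
  pose proof (Rabs_pos (Dl (x (A k) + beta n x (B k)) - Dl (y (A k) + beta n y (B k)))).
  nra.
Qed.


Lemma matvec_Jf m n a theta J v i : is_jacobian m (Fmap n a) theta J -> (i < m)%nat ->
  matvec m J v i = sumR m (fun p => Jf n theta i p * v p).
Proof. intros H Hi. unfold matvec. apply sumR_ext. intros p Hp. rewrite (J_eq m n a theta J i p); auto. Qed.

Lemma part_a (n : nat) (a : nat -> nat -> bool) (x y v : nat -> R)
          (Jx Jy : nat -> nat -> R) :
     (2 <= n)%nat ->
     is_jacobian (2 * n - 1) (Fmap n a) x Jx ->
     is_jacobian (2 * n - 1) (Fmap n a) y Jy ->
     norm_inf (2 * n - 1) (vsub (matvec (2 * n - 1) Jx v) (matvec (2 * n - 1) Jy v))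
       <= INR (n - 1) * norm_inf (2 * n - 1) (vsub x y) * norm_inf (2 * n - 1) v
     /\
     (forall i, (i < 2 * n - 1)%nat ->
        norm_inf (2 * n - 1) (vsub (Jx i) (Jy i))
          <= INR (n - 1) / 2 * norm_inf (2 * n - 1) (vsub x y)).
Proof. intros Hn HJx HJy.
  pose proof (norm_inf_nonneg (2*n-1) (vsub x y)). pose proof (norm_inf_nonneg (2*n-1) v).
  assert (0 <= INR (n-1)) by apply pos_INR.
  split.
  - apply norm_inf_le. apply Rmult_le_pos; [apply Rmult_le_pos|]; lra.
    intros i Hi. unfold vsub at 1. rewrite (matvec_Jf _ n a x Jx), (matvec_Jf _ n a y Jy) by auto.
    unfold Jf. destruct (Nat.ltb_spec i n).
    + apply rowdiff_a1; auto. intros k Hk; split; lia.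
    + apply rowdiff_a1; auto. lia. intros k Hk; split; lia.
  - intros i Hi. apply norm_inf_le. apply Rmult_le_pos; lra.
    intros p Hp. unfold vsub at 1. rewrite (J_eq (2*n-1) n a x Jx i p), (J_eq (2*n-1) n a y Jy i p) by auto.
    unfold Jf. destruct (Nat.ltb_spec i n).
    + apply rowdiff_a2; auto.
    + apply rowdiff_a2; auto. lia.
Qed.


Definition SA n (c : nat -> nat -> R) (u y : nat -> R) i :=
  sumR n (fun k => if Nat.eqb k i then 0 else c i k * (u i - y k)).
Definition SB n (c : nat -> nat -> R) (u y : nat -> R) j :=
  sumR n (fun k => if Nat.eqb k j then 0 else c k j * (y j - u k)).
Definition ct (c : nat -> nat -> R) := fun i k => c k i.

Lemma SB_SA n c u y j : SB n c u y j = SA n (ct c) y u j.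
Proof. reflexivity. Qed.
Lemma SA_SB n c u y j : SA n c u y j = SB n (ct c) y u j.
Proof. reflexivity. Qed.

Lemma argmax f n : (0 < n)%nat -> exists p, (p < n)%nat /\ forall k, (k < n)%nat -> f k <= f p.
Proof. induction n; intros H; [lia|]. destruct n.
  - exists 0%nat. split; [lia|]. intros k Hk. replace k with 0%nat by lia. lra.
  - destruct IHn as [p [Hp Hk]]; [lia|]. destruct (Rle_dec (f (S n)) (f p)).
    + exists p. split; [lia|]. intros k Hk'. destruct (Nat.eq_dec k (S n)); [subst; auto|]. apply Hk; lia.
    + exists (S n). split; [lia|]. intros k Hk'. destruct (Nat.eq_dec k (S n)); [subst; lra|].
      specialize (Hk k ltac:(lia)). lra. Qed.

Lemma argmin f n : (0 < n)%nat -> exists p, (p < n)%nat /\ forall k, (k < n)%nat -> f p <= f k.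
Proof. intros H. destruct (argmax (fun k => - f k) n H) as [p [Hp Hk]].
  exists p. split; auto. intros k Hk'. specialize (Hk k Hk'). lra. Qed.


Lemma L1max n (c : nat -> nat -> R) (m B : R) u y p : 0 < m -> (forall i k, (i < n)%nat -> (k < n)%nat -> m <= c i k) ->
  (p < n)%nat -> (forall k, (k < n)%nat -> y k <= u p) -> SA n c u y p <= B ->
  m * (sumR n (fun k => u p - y k) - (u p - y p)) <= B.
Proof. intros Hm Hc Hp Hy HS.
  rewrite <- (sumR_excl n p (fun k => u p - y k)) by auto. rewrite <- sumR_scal.
  eapply Rle_trans; [|exact HS]. unfold SA. apply sumR_le. intros k Hk.
  destruct (Nat.eqb k p); [lra|]. specialize (Hc p k Hp Hk). specialize (Hy k Hk).
  apply Rmult_le_compat_r; lra. Qed.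

Lemma L1min n (c : nat -> nat -> R) (m B : R) u y q : 0 < m -> (forall i k, (i < n)%nat -> (k < n)%nat -> m <= c i k) ->
  (q < n)%nat -> (forall k, (k < n)%nat -> u q <= y k) -> - B <= SA n c u y q ->
  m * (sumR n (fun k => y k - u q) - (y q - u q)) <= B.
Proof. intros Hm Hc Hp Hy HS.
  rewrite <- (sumR_excl n q (fun k => y k - u q)) by auto. rewrite <- sumR_scal.
  apply Rle_trans with (- SA n c u y q); [|lra]. unfold SA. rewrite <- sumR_opp. apply sumR_le. intros k Hk.
  destruct (Nat.eqb k q); [lra|]. specialize (Hc q k Hp Hk). specialize (Hy k Hk).
  assert (m * (y k - u q) <= c q k * (y k - u q)) by (apply Rmult_le_compat_r; lra). lra. Qed.


Lemma sum_split_UL n (U L : R) (f : nat -> R) :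
  sumR n (fun k => U - f k) + sumR n (fun k => f k - L) = INR n * (U - L).
Proof. rewrite <- sumR_plus, <- sumR_const. apply sumR_ext. intros; ring. Qed.

Lemma CaseUU n c u y m B U L p q : 0 < m ->
  (forall i k, (i < n)%nat -> (k < n)%nat -> m <= c i k) ->
  (p < n)%nat -> (q < n)%nat ->
  (forall k, (k < n)%nat -> L <= u k <= U /\ L <= y k <= U) ->
  u p = U -> u q = L -> SA n c u y p <= B -> - B <= SA n c u y q ->
  m * (INR n - 2) * (U - L) <= 2 * B.
Proof. intros Hm Hc Hp Hq Hb HU HL HSp HSq.
  assert (H1 := L1max n c m B u y p Hm Hc Hp ltac:(intros k Hk; destruct (Hb k Hk); lra) HSp).
  assert (H2 := L1min n c m B u y q Hm Hc Hq ltac:(intros k Hk; destruct (Hb k Hk); lra) HSq).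
  rewrite HU in H1. rewrite HL in H2.
  assert (Hs := sum_split_UL n U L y).
  destruct (Hb p Hp) as [_ Hyp]. destruct (Hb q Hq) as [_ Hyq].
  assert (m * (U - y p) <= m * (U - L)) by (apply Rmult_le_compat_l; lra).
  assert (m * (y q - L) <= m * (U - L)) by (apply Rmult_le_compat_l; lra).
  set (S1 := sumR n (fun k => U - y k)) in *. set (S2 := sumR n (fun k => y k - L)) in *.
  assert (m * (S1 + S2) = m * (INR n * (U - L))) by (rewrite Hs; reflexivity).
  nra. Qed.

Lemma excl_plus n k f g :
  sumR n (fun l => if Nat.eqb l k then 0 else f l + g l) =
  sumR n (fun l => if Nat.eqb l k then 0 else f l) + sumR n (fun l => if Nat.eqb l k then 0 else g l).
Proof. rewrite <- sumR_plus. apply sumR_ext. intros. destruct (Nat.eqb k0 k); ring. Qed.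

Lemma CaseUL n c u y m M B U L p q : (2 <= n)%nat -> 0 < m -> 0 <= M -> 0 <= B ->
  (forall i k, (i < n)%nat -> (k < n)%nat -> m <= c i k <= M) ->
  (p < n)%nat -> (q < n)%nat ->
  (forall k, (k < n)%nat -> L <= u k <= U /\ L <= y k <= U) ->
  u p = U -> y q = L -> SA n c u y p <= B -> - B <= SB n c u y q ->
  (forall k, (k < n)%nat -> SB n c u y k <= B) ->
  m * (INR n - 2) * (U - L) <= 2 * B + M * B / m.
Proof. intros Hn Hm HM HB Hc Hp Hq Hb HU HL HSp HSq HSk.
  assert (Hcm : forall i k, (i < n)%nat -> (k < n)%nat -> m <= c i k) by (intros; apply Hc; auto).
  assert (Hctm : forall i k, (i < n)%nat -> (k < n)%nat -> m <= ct c i k) by (intros; unfold ct; apply Hc; auto).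
  assert (H1 := L1max n c m B u y p Hm Hcm Hp ltac:(intros k Hk; destruct (Hb k Hk); lra) HSp).
  assert (H2 := L1min n (ct c) m B y u q Hm Hctm Hq ltac:(intros k Hk; destruct (Hb k Hk); lra) HSq).
  rewrite HU in H1. rewrite HL in H2.
  set (S1 := sumR n (fun k => U - y k)) in *.
  set (S2 := sumR n (fun k => u k - L)) in *.
  set (S3 := sumR n (fun k => U - u k)) in *.
  assert (Hs : S3 + S2 = INR n * (U - L)) by apply sum_split_UL.
  assert (Hn1 : 1 <= INR n - 1). { assert (INR 2 <= INR n) by (apply le_INR; auto). simpl in H. lra. }
  assert (H3 : forall k, (k < n)%nat -> m * (S3 - (U - u k)) <= (INR n - 1) * (M * (U - y k)) + B).
  { intros k Hk. unfold S3. rewrite <- (sumR_excl n k (fun l => U - u l)) by auto.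
    rewrite <- sumR_scal.
    apply Rle_trans with (sumR n (fun l => if Nat.eqb l k then 0 else c l k * (U - y k) + c l k * (y k - u l))).
    { apply sumR_le. intros l Hl. destruct (Nat.eqb l k); [lra|].
      destruct (Hb l Hl). destruct (Hc l k Hl Hk).
      assert (m * (U - u l) <= c l k * (U - u l)) by (apply Rmult_le_compat_r; lra). lra. }
    rewrite excl_plus. fold (SB n c u y k).
    assert (sumR n (fun l => if Nat.eqb l k then 0 else c l k * (U - y k)) <= (INR n - 1) * (M * (U - y k))).
    { apply Rle_trans with (sumR n (fun l => if Nat.eqb l k then 0 else M * (U - y k))).
      apply sumR_le. intros l Hl. destruct (Nat.eqb l k); [lra|]. destruct (Hb k Hk). destruct (Hc l k Hl Hk).
      apply Rmult_le_compat_r; lra.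
      rewrite sumR_excl, sumR_const by auto. lra. }
    specialize (HSk k Hk). lra. }
  set (X := m * (INR n - 2) * (U - L)).
  assert (H4 : forall k, (k < n)%nat -> X - 2 * B <= (INR n - 1) * (M * (U - y k))).
  { intros k Hk. specialize (H3 k Hk). destruct (Hb k Hk). destruct (Hb q Hq).
    assert (m * (U - u k) <= m * (U - L)) by (apply Rmult_le_compat_l; lra).
    assert (m * (u q - L) <= m * (U - L)) by (apply Rmult_le_compat_l; lra).
    assert (m * (S3 + S2) = m * (INR n * (U - L))) by (rewrite Hs; reflexivity).
    unfold X. nra. }
  assert (H5 : sumR n (fun k => if Nat.eqb k p then 0 else X - 2 * B) <=
               sumR n (fun k => if Nat.eqb k p then 0 else (INR n - 1) * M * (U - y k))).
  { apply sumR_le. intros k Hk. destruct (Nat.eqb k p); [lra|]. specialize (H4 k Hk). lra. }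
  rewrite !sumR_excl, sumR_const in H5 by auto.
  rewrite sumR_scal in H5. fold S1 in H5.
  assert (H6 : X - 2 * B <= M * (S1 - (U - y p))).
  { apply Rmult_le_reg_l with (INR n - 1). lra. nra. }
  assert (H7 : M * (S1 - (U - y p)) <= M * B / m).
  { unfold Rdiv. rewrite Rmult_assoc. apply Rmult_le_compat_l; auto.
    apply Rmult_le_reg_l with m; auto. rewrite <- Rmult_assoc, (Rmult_comm m B), Rmult_assoc, Rinv_r by lra. lra. }
  lra. Qed.

Lemma abs_split x B : Rabs x <= B -> - B <= x <= B.
Proof. unfold Rabs; destruct (Rcase_abs x); intros; lra. Qed.

Lemma core n c u y m M B : (3 <= n)%nat -> 0 < m -> 0 <= M -> 0 <= B ->
  (forall i k, (i < n)%nat -> (k < n)%nat -> m <= c i k <= M) ->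
  (forall i, (i < n)%nat -> Rabs (SA n c u y i) <= B) ->
  (forall j, (j < n)%nat -> Rabs (SB n c u y j) <= B) ->
  exists U L, (forall k, (k < n)%nat -> L <= u k <= U /\ L <= y k <= U) /\
     m * (INR n - 2) * (U - L) <= 2 * B + M * B / m.
Proof. intros Hn Hm HM HB Hc HA HB'.
  assert (Hcm : forall i k, (i < n)%nat -> (k < n)%nat -> m <= c i k) by (intros; apply Hc; auto).
  assert (Hctm : forall i k, (i < n)%nat -> (k < n)%nat -> m <= ct c i k) by (intros; unfold ct; apply Hc; auto).
  assert (Hct : forall i k, (i < n)%nat -> (k < n)%nat -> m <= ct c i k <= M) by (intros; unfold ct; apply Hc; auto).
  assert (HMB : 0 <= M * B / m) by (unfold Rdiv; apply Rmult_le_pos; [apply Rmult_le_pos; auto| left; apply Rinv_0_lt_compat; auto]).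
  destruct (argmax u n ltac:(lia)) as [p1 [Hp1 Hu1]].
  destruct (argmax y n ltac:(lia)) as [p2 [Hp2 Hy2]].
  destruct (argmin u n ltac:(lia)) as [q1 [Hq1 Hu3]].
  destruct (argmin y n ltac:(lia)) as [q2 [Hq2 Hy4]].
  exists (Rmax (u p1) (y p2)), (Rmin (u q1) (y q2)).
  assert (Hb : forall k, (k < n)%nat -> Rmin (u q1) (y q2) <= u k <= Rmax (u p1) (y p2) /\
                                     Rmin (u q1) (y q2) <= y k <= Rmax (u p1) (y p2)).
  { intros k Hk. pose proof (Rmax_l (u p1) (y p2)). pose proof (Rmax_r (u p1) (y p2)).
    pose proof (Rmin_l (u q1) (y q2)). pose proof (Rmin_r (u q1) (y q2)).
    specialize (Hu1 k Hk). specialize (Hy2 k Hk). specialize (Hu3 k Hk). specialize (Hy4 k Hk). lra. }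
  split; auto.
  assert (Hb' : forall k, (k < n)%nat -> Rmin (u q1) (y q2) <= y k <= Rmax (u p1) (y p2) /\
                                     Rmin (u q1) (y q2) <= u k <= Rmax (u p1) (y p2))
    by (intros k Hk; destruct (Hb k Hk); split; auto).
  destruct (Rle_dec (u p1) (y p2)); destruct (Rle_dec (u q1) (y q2)).
  - rewrite (Rmax_right _ _ r) in *. rewrite (Rmin_left _ _ r0) in *.
    apply (CaseUL n (ct c) y u m M B _ _ p2 q1); auto; try lia.
    + apply (abs_split _ _ (HB' p2 Hp2)).
    + apply (abs_split _ _ (HA q1 Hq1)).
    + intros k Hk. apply (abs_split _ _ (HA k Hk)).
  - rewrite (Rmax_right _ _ r) in *. rewrite (Rmin_right (u q1) (y q2) ltac:(apply Rlt_le, Rnot_le_lt; assumption)) in *.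
    eapply Rle_trans; [|apply (Rplus_le_compat_l (2 * B) 0); exact HMB]. rewrite Rplus_0_r.
    apply (CaseUU n (ct c) y u m B _ _ p2 q2); auto.
    + apply (abs_split _ _ (HB' p2 Hp2)).
    + apply (abs_split _ _ (HB' q2 Hq2)).
  - rewrite (Rmax_left (u p1) (y p2) ltac:(apply Rlt_le, Rnot_le_lt; assumption)) in *. rewrite (Rmin_left _ _ r) in *.
    eapply Rle_trans; [|apply (Rplus_le_compat_l (2 * B) 0); exact HMB]. rewrite Rplus_0_r.
    apply (CaseUU n c u y m B _ _ p1 q1); auto.
    + apply (abs_split _ _ (HA p1 Hp1)).
    + apply (abs_split _ _ (HA q1 Hq1)).
  - rewrite (Rmax_left (u p1) (y p2) ltac:(apply Rlt_le, Rnot_le_lt; assumption)) in *. rewrite (Rmin_right (u q1) (y q2) ltac:(apply Rlt_le, Rnot_le_lt; assumption)) in *.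
    apply (CaseUL n c u y m M B _ _ p1 q2); auto; try lia.
    + apply (abs_split _ _ (HA p1 Hp1)).
    + apply (abs_split _ _ (HB' q2 Hq2)).
    + intros k Hk. apply (abs_split _ _ (HB' k Hk)).
Qed.


Lemma exp_le x y : x <= y -> exp x <= exp y.
Proof. intros [H|H]. left; apply exp_increasing; auto. subst; lra. Qed.

Lemma c_bounds n theta i k : (i < n)%nat -> (k < n)%nat ->
  exp (- (2 * norm_inf (2*n-1) theta)) / 4 <= Dl (theta i + beta n theta k) <= 1/4.
Proof. intros Hi Hk. split; [|apply Dl_le].
  eapply Rle_trans; [|apply Dl_ge]. unfold Rdiv. apply Rmult_le_compat_r; [lra|].
  apply exp_le. pose proof (norm_inf_ge (2*n-1) theta i ltac:(lia)). pose proof (beta_abs n theta k).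
  pose proof (Rabs_triang (theta i) (beta n theta k)). lra. Qed.

Lemma SA_mv n a theta J v i : (2 <= n)%nat -> is_jacobian (2*n-1) (Fmap n a) theta J -> (i < n)%nat ->
  SA n (fun i k => Dl (theta i + beta n theta k)) v (fun k => - beta n v k) i = - matvec (2*n-1) J v i.
Proof. intros Hn HJ Hi. rewrite (matvec_Jf _ n a theta J) by (auto; lia).
  unfold Jf. destruct (Nat.ltb_spec i n); [|lia].
  rewrite (matvec_row (2*n-1)) by (intros; split; lia).
  rewrite Ropp_involutive. unfold SA. apply sumR_ext. intros k Hk. destruct (Nat.eqb k i); ring. Qed.

Lemma SB_mv n a theta J v j : (2 <= n)%nat -> is_jacobian (2*n-1) (Fmap n a) theta J -> (j < n - 1)%nat ->
  SB n (fun i k => Dl (theta i + beta n theta k)) v (fun k => - beta n v k) j = matvec (2*n-1) J v (n + j).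
Proof. intros Hn HJ Hj. rewrite (matvec_Jf _ n a theta J) by (auto; lia).
  unfold Jf. destruct (Nat.ltb_spec (n + j) n); [lia|].
  replace (n + j - n)%nat with j by lia.
  rewrite (matvec_row (2*n-1)) by (intros; split; lia).
  unfold SB. rewrite <- sumR_opp. apply sumR_ext. intros k Hk. destruct (Nat.eqb k j); ring. Qed.

Lemma sum_identity n c u y : sumR n (fun i => SA n c u y i) + sumR n (fun j => SB n c u y j) = 0.
Proof. unfold SA, SB. rewrite (sumR_swap n n (fun j k => if Nat.eqb k j then 0 else c k j * (y j - u k))).
  rewrite <- sumR_plus. apply sumR_zero. intros i Hi. rewrite <- sumR_plus. apply sumR_zero.
  intros k Hk. rewrite (Nat.eqb_sym i k). destruct (Nat.eqb k i); ring. Qed.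

Lemma solve_bound n a theta J v B : (3 <= n)%nat -> is_jacobian (2*n-1) (Fmap n a) theta J -> 0 <= B ->
  (forall i, (i < 2*n-1)%nat -> Rabs (matvec (2*n-1) J v i) <= B) ->
  Rabs (sumR n (fun i => matvec (2*n-1) J v i) - sumR (n-1) (fun j => matvec (2*n-1) J v (n + j))) <= B ->
  forall i, (i < 2*n-1)%nat ->
    exp (- (2 * norm_inf (2*n-1) theta)) / 4 * (INR n - 2) * Rabs (v i)
      <= 2 * B + 1/4 * B / (exp (- (2 * norm_inf (2*n-1) theta)) / 4).
Proof. intros Hn HJ HB Hw Hs.
  set (c := fun i k => Dl (theta i + beta n theta k)).
  set (y := fun k => - beta n v k).
  set (m0 := exp (- (2 * norm_inf (2*n-1) theta)) / 4).
  assert (Hm0 : 0 < m0) by (unfold m0; pose proof (exp_pos (- (2 * norm_inf (2*n-1) theta))); lra).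
  assert (HSA : forall i, (i < n)%nat -> Rabs (SA n c v y i) <= B).
  { intros i Hi. unfold c, y. rewrite (SA_mv n a theta J) by (auto; lia). rewrite Rabs_Ropp. apply Hw; lia. }
  assert (HSB : forall j, (j < n)%nat -> Rabs (SB n c v y j) <= B).
  { intros j Hj. destruct (Nat.eq_dec j (n-1)).
    - subst j. pose proof (sum_identity n c v y) as Hid.
      assert (HS : forall f, sumR n f = sumR (n-1) f + f (n-1)%nat).
      { intros f. destruct n as [|n']; [lia|]. rewrite sumR_S. simpl. rewrite Nat.sub_0_r. reflexivity. }
      rewrite (HS (fun j => SB n c v y j)) in Hid.
      replace (SB n c v y (n-1)) with
        (sumR n (fun i => matvec (2*n-1) J v i) - sumR (n-1) (fun j => matvec (2*n-1) J v (n + j))).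
      auto.
      rewrite (sumR_ext n _ (fun i => - SA n c v y i)) by (intros i Hi; unfold c, y; rewrite (SA_mv n a theta J); try ring; auto; lia).
      rewrite (sumR_ext (n-1) _ (fun i => SB n c v y i)) by (intros i Hi; unfold c, y; rewrite (SB_mv n a theta J); try reflexivity; auto; lia).
      rewrite sumR_opp. change (fun i : nat => SA n c v y i) with (SA n c v y) in Hid. lra.
    - unfold c, y. rewrite (SB_mv n a theta J) by (auto; lia). apply Hw; lia. }
  destruct (core n c v y m0 (1/4) B ltac:(auto) Hm0 ltac:(lra) HB
     ltac:(intros; unfold c, m0; apply c_bounds; auto) HSA HSB) as [U [L [Hb HUL]]].
  intros i Hi. fold m0.
  assert (Hn2 : 0 <= INR n - 2). { assert (INR 3 <= INR n) by (apply le_INR; auto). simpl in H. lra. }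
  assert (Hy0 : y (n-1)%nat = 0). { unfold y, beta. destruct (Nat.ltb_spec (n-1) (n-1)); [lia|]. ring. }
  assert (Hv : Rabs (v i) <= U - L).
  { destruct (Hb (n-1)%nat ltac:(lia)) as [_ Hyn]. rewrite Hy0 in Hyn.
    destruct (Nat.ltb_spec i n).
    - destruct (Hb i H). apply Rabs_le; lra.
    - destruct (Hb (i - n)%nat ltac:(lia)) as [_ Hyi].
      assert (y (i - n)%nat = - v i). { unfold y, beta. destruct (Nat.ltb_spec (i-n) (n-1)); [|lia].
        replace (n + (i - n))%nat with i by lia. ring. }
      apply Rabs_le; lra. }
  eapply Rle_trans; [|exact HUL]. apply Rmult_le_compat_l; auto. apply Rmult_le_pos; lra.
Qed.


Lemma final_arith (N T X : R) : 3 <= N -> 0 <= T -> 0 <= X ->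
  exp (- (2 * T)) / 4 * (N - 2) * X <=
    2 * sqrt ((N - 1) * ln (N - 1)) + 1/4 * sqrt ((N - 1) * ln (N - 1)) / (exp (- (2 * T)) / 4) ->
  X <= sqrt (ln N) / sqrt N * (12 * exp (6 * T) + 24 * exp (2 * T)).
Proof. intros HN HT HX H.
  set (E := exp (2 * T)) in *. set (B := sqrt ((N - 1) * ln (N - 1))) in *.
  assert (HE : 1 <= E) by (unfold E; pose proof (exp_ineq1_le (2*T)); lra).
  rewrite exp_Ropp in H. fold E in H.
  assert (H6 : exp (6 * T) = E * E * E) by (unfold E; rewrite <- !exp_plus; f_equal; ring).
  rewrite H6.
  replace (1/4 * B / (/ E / 4)) with (B * E) in H by (field; lra).
  assert (HB0 : 0 <= B) by apply sqrt_pos.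
  assert (H1 : (N - 2) * X <= 4 * E * (B * (2 + E))).
  { apply Rmult_le_reg_l with (/ E / 4). apply Rmult_lt_0_compat; [apply Rinv_0_lt_compat; lra|lra].
    replace (/ E / 4 * (4 * E * (B * (2 + E)))) with (2 * B + B * E) by (field; lra). lra. }
  set (sN := sqrt N). set (sl := sqrt (ln N)).
  assert (HsN : 0 < sN) by (apply sqrt_lt_R0; lra).
  assert (HsN2 : sN * sN = N) by (apply sqrt_sqrt; lra).
  assert (Hl1 : 0 < ln (N - 1)) by (rewrite <- ln_1; apply ln_increasing; lra).
  assert (Hl2 : ln (N - 1) < ln N) by (apply ln_increasing; lra).
  assert (Hsl : 0 <= sl) by apply sqrt_pos.
  assert (HBle : B <= sN * sl).
  { unfold B, sN, sl. rewrite <- sqrt_mult by lra. apply sqrt_le_1_alt. nra. }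
  assert (H2 : (N - 2) * X * sN <= 4 * E * (2 + E) * N * sl).
  { apply Rle_trans with (4 * E * (B * (2 + E)) * sN). apply Rmult_le_compat_r; lra.
    rewrite <- HsN2. assert (0 <= 4 * E * (2 + E)) by nra.
    replace (4 * E * (B * (2 + E)) * sN) with ((4 * E * (2 + E)) * (B * sN)) by ring.
    replace (4 * E * (2 + E) * (sN * sN) * sl) with ((4 * E * (2 + E)) * (sN * sl * sN)) by ring.
    apply Rmult_le_compat_l; auto. apply Rmult_le_compat_r; lra. }
  assert (H3 : 4 * E * (2 + E) * N * sl <= (N - 2) * (sl * (12 * (E * E * E) + 24 * E))).
  { assert (4 * E * (2 + E) * N <= (N - 2) * (12 * (E * E * E) + 24 * E)).
    { assert (E * E <= E * E * E) by nra. nra. }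
    replace ((N - 2) * (sl * (12 * (E * E * E) + 24 * E))) with (((N - 2) * (12 * (E * E * E) + 24 * E)) * sl) by ring.
    apply Rmult_le_compat_r; auto. }
  apply Rmult_le_reg_l with ((N - 2) * sN). nra.
  replace ((N - 2) * sN * (sl / sN * (12 * (E * E * E) + 24 * E))) with ((N - 2) * (sl * (12 * (E * E * E) + 24 * E))) by (field; lra).
  lra. Qed.


Lemma deg_identity n a theta : (1 <= n)%nat ->
  sumR n (fun i => Fmap n a theta i) - sumR (n-1) (fun j => Fmap n a theta (n + j))
  = indeg n a (n-1) - Eindeg n theta (n-1).
Proof. intros Hn.
  rewrite (sumR_ext n _ (fun i => outdeg n a i - Eoutdeg n theta i)) by
    (intros i Hi; unfold Fmap; destruct (Nat.ltb_spec i n); [reflexivity|lia]).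
  rewrite (sumR_ext (n-1) _ (fun j => indeg n a j - Eindeg n theta j)) by
    (intros j Hj; unfold Fmap; destruct (Nat.ltb_spec (n+j) n); [lia|]; replace (n + j - n)%nat with j by lia; reflexivity).
  assert (HS : forall f, sumR n f = sumR (n-1) f + f (n-1)%nat).
  { intros f. destruct n as [|n']; [lia|]. rewrite sumR_S. simpl. rewrite Nat.sub_0_r. reflexivity. }
  assert (Hd : sumR n (fun i => outdeg n a i) = sumR n (fun j => indeg n a j)).
  { unfold outdeg, indeg. rewrite sumR_swap. apply sumR_ext. intros j Hj. apply sumR_ext. intros i Hi.
    rewrite Nat.eqb_sym. reflexivity. }
  assert (He : sumR n (fun i => Eoutdeg n theta i) = sumR n (fun j => Eindeg n theta j)).
  { unfold Eoutdeg, Eindeg. rewrite sumR_swap. apply sumR_ext. intros j Hj. apply sumR_ext. intros i Hi.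
    rewrite Nat.eqb_sym. reflexivity. }
  change (fun i => outdeg n a i) with (outdeg n a) in Hd. change (fun j => indeg n a j) with (indeg n a) in Hd.
  change (fun i => Eoutdeg n theta i) with (Eoutdeg n theta) in He. change (fun j => Eindeg n theta j) with (Eindeg n theta) in He.
  rewrite sumR_minus, Hd, He, sumR_minus, (HS (indeg n a)), (HS (Eindeg n theta)). ring. Qed.

Lemma part_b : exists c11 c12 : R, 0 < c11 /\ 0 < c12 /\
     forall thetas : nat -> nat -> R,
       Un_cv (fun n => exp (2 * norm_inf (2 * n - 1) (thetas n)) / INR n) 0 ->
       exists N : nat, forall n : nat, (N <= n)%nat ->
         forall (a : nat -> nat -> bool) (J : nat -> nat -> R),
           is_jacobian (2 * n - 1) (Fmap n a) (thetas n) J ->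
           (forall i, (i < n)%nat ->
              Rabs (outdeg n a i - Eoutdeg n (thetas n) i)
                <= sqrt (INR (n - 1) * ln (INR (n - 1)))) ->
           (forall j, (j < n)%nat ->
              Rabs (indeg n a j - Eindeg n (thetas n) j)
                <= sqrt (INR (n - 1) * ln (INR (n - 1)))) ->
           invertible (2 * n - 1) J /\
           forall z : nat -> R,
             (forall i, (i < 2 * n - 1)%nat ->
                matvec (2 * n - 1) J z i = Fmap n a (thetas n) i) ->
             norm_inf (2 * n - 1) z
               <= sqrt (ln (INR n)) / sqrt (INR n)
                  * (c11 * exp (6 * norm_inf (2 * n - 1) (thetas n))
                     + c12 * exp (2 * norm_inf (2 * n - 1) (thetas n))).
Proof.
  exists 12, 24. split; [lra|]. split; [lra|].
  intros thetas _. exists 3%nat. intros n Hn a J HJ Hout Hin.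
  set (theta := thetas n) in *. set (T := norm_inf (2*n-1) theta).
  assert (HT : 0 <= T) by apply norm_inf_nonneg.
  assert (HN3 : 3 <= INR n) by (replace 3 with (INR 3) by (simpl; ring); apply le_INR; auto).
  assert (Hm0 : 0 < exp (- (2 * T)) / 4) by (pose proof (exp_pos (- (2 * T))); lra).
  split.
  - intros v Hv i Hi.
    assert (H := solve_bound n a theta J v 0 Hn HJ ltac:(lra)
      ltac:(intros j Hj; rewrite Hv by auto; rewrite Rabs_R0; lra)
      ltac:(rewrite (sumR_zero n), (sumR_zero (n-1)); [rewrite Rminus_0_r, Rabs_R0; lra| |];
            intros; apply Hv; lia) i Hi).
    fold T in H. replace (2 * 0 + 1/4 * 0 / (exp (- (2 * T)) / 4)) with 0 in H by (field; lra).
    assert (0 <= Rabs (v i)) by apply Rabs_pos.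
    assert (0 < exp (- (2 * T)) / 4 * (INR n - 2)) by nra.
    assert (Rabs (v i) = 0) by nra.
    destruct (Req_dec (v i) 0); auto. exfalso. apply Rabs_no_R0 in H3; auto.
  - intros z Hz. set (B := sqrt (INR (n - 1) * ln (INR (n - 1)))).
    assert (HB : 0 <= B) by apply sqrt_pos.
    assert (Hw : forall i, (i < 2*n-1)%nat -> Rabs (matvec (2*n-1) J z i) <= B).
    { intros i Hi. rewrite Hz by auto. unfold Fmap. destruct (Nat.ltb_spec i n).
      apply Hout; auto. apply Hin; lia. }
    assert (Hs : Rabs (sumR n (fun i => matvec (2*n-1) J z i) - sumR (n-1) (fun j => matvec (2*n-1) J z (n + j))) <= B).
    { rewrite (sumR_ext n _ (fun i => Fmap n a theta i)) by (intros; apply Hz; lia).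
      rewrite (sumR_ext (n-1) _ (fun j => Fmap n a theta (n + j))) by (intros; apply Hz; lia).
      rewrite deg_identity by lia. apply Hin; lia. }
    apply norm_inf_le.
    { apply Rmult_le_pos. unfold Rdiv. apply Rmult_le_pos. apply sqrt_pos. left; apply Rinv_0_lt_compat, sqrt_lt_R0; lra.
      pose proof (exp_pos (6 * T)); pose proof (exp_pos (2 * T)); lra. }
    intros i Hi. assert (H := solve_bound n a theta J z B Hn HJ HB Hw Hs i Hi). fold T in H.
    unfold B in H. rewrite minus_INR in H by lia. simpl INR in H at 2 3.
    apply (final_arith (INR n) T); auto. apply Rabs_pos.
Qed.

Theorem lemma2 :
  (* (a) *)
  (forall (n : nat) (a : nat -> nat -> bool) (x y v : nat -> R)
          (Jx Jy : nat -> nat -> R),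
     (2 <= n)%nat ->
     is_jacobian (2 * n - 1) (Fmap n a) x Jx ->
     is_jacobian (2 * n - 1) (Fmap n a) y Jy ->
     norm_inf (2 * n - 1) (vsub (matvec (2 * n - 1) Jx v) (matvec (2 * n - 1) Jy v))
       <= INR (n - 1) * norm_inf (2 * n - 1) (vsub x y) * norm_inf (2 * n - 1) v
     /\
     (forall i, (i < 2 * n - 1)%nat ->
        norm_inf (2 * n - 1) (vsub (Jx i) (Jy i))
          <= INR (n - 1) / 2 * norm_inf (2 * n - 1) (vsub x y)))
  /\
  (* (b) *)
  (exists c11 c12 : R, 0 < c11 /\ 0 < c12 /\
     forall thetas : nat -> nat -> R,
       Un_cv (fun n => exp (2 * norm_inf (2 * n - 1) (thetas n)) / INR n) 0 ->
       exists N : nat, forall n : nat, (N <= n)%nat ->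
         forall (a : nat -> nat -> bool) (J : nat -> nat -> R),
           is_jacobian (2 * n - 1) (Fmap n a) (thetas n) J ->
           (forall i, (i < n)%nat ->
              Rabs (outdeg n a i - Eoutdeg n (thetas n) i)
                <= sqrt (INR (n - 1) * ln (INR (n - 1)))) ->
           (forall j, (j < n)%nat ->
              Rabs (indeg n a j - Eindeg n (thetas n) j)
                <= sqrt (INR (n - 1) * ln (INR (n - 1)))) ->
           invertible (2 * n - 1) J /\
           forall z : nat -> R,
             (forall i, (i < 2 * n - 1)%nat ->
                matvec (2 * n - 1) J z i = Fmap n a (thetas n) i) ->
             norm_inf (2 * n - 1) z
               <= sqrt (ln (INR n)) / sqrt (INR n)
                  * (c11 * exp (6 * norm_inf (2 * n - 1) (thetas n))
                     + c12 * exp (2 * norm_inf (2 * n - 1) (thetas n)))).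
Proof.
  split.
  - intros n a x y v Jx Jy Hn HJx HJy. apply (part_a n a x y v Jx Jy Hn HJx HJy).
  - exact part_b.
Qed.
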